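(* For every integer $m\geq 1$, \[ \mathcal{I}_m=\big\{(i,j,t,p)\in\mathbb{Z}^4 \;\big|\; 0\leq i,j\leq m,\ \max\{i+j-m,\ m-1-i-j\}\leq t\leq m-|i-j|,\ \max\{0,\ i+j-m,\ i+t-m,\ j+t-m\}\leq p\leq \min\{i,\ j,\ t,\ i+j+t+1-m\}\big\}. \] Moreover, $|\mathcal{I}_m|=\binom{m+4}{4}$.
   Context: Let $m$ be a positive integer, $S=\{1,2,\ldots,2m+1\}$, and let $X$ be the set of all $m$-element subsets of $S$. For an ordered triple $(x,y,z)\in X\times X\times X$ define $\partial(x,y,z):=(|x\cap y|,\ |x\cap z|,\ |y\cap z|,\ |x\cap y\cap z|)$. Let $\mathcal{I}_m$ denote the set of all four-tuples $(i,j,t,p)$ such that $\partial(x,y,z)=(i,j,t,p)$ for some $x,y,z\in X$. *)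

(* Defs.v *)
From mathcomp Require Import all_boot all_order all_algebra.
Set Implicit Arguments. Unset Strict Implicit. Unset Printing Implicit Defensive.
Import Order.TTheory GRing.Theory Num.Theory.

(* S = {1,...,2m+1} is modelled by 'I_(2m+1) = {0,...,2m}. *)
Definition Xsets (m : nat) : {set {set 'I_(2 * m + 1)}} :=
  [set x : {set 'I_(2 * m + 1)} | #|x| == m].

Definition in_Im (m : nat) (i j t p : int) : Prop :=
  exists x y z : {set 'I_(2 * m + 1)},
    [/\ x \in Xsets m, y \in Xsets m, z \in Xsets m &
     [/\ (Posz #|x :&: y| = i), (Posz #|x :&: z| = j), (Posz #|y :&: z| = t)
       & (Posz #|x :&: y :&: z| = p)]].

(* I_m as a finite set; all its tuples lie in [0,m]^4 since every
   intersection of m-sets has at most m elements. *)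
Definition Imset (m : nat) :
  {set 'I_m.+1 * 'I_m.+1 * 'I_m.+1 * 'I_m.+1} :=
  [set q : 'I_m.+1 * 'I_m.+1 * 'I_m.+1 * 'I_m.+1 | [exists x in Xsets m, exists y in Xsets m, exists z in Xsets m,
     [&& #|x :&: y| == val q.1.1.1, #|x :&: z| == val q.1.1.2,
         #|y :&: z| == val q.1.2 & #|x :&: y :&: z| == val q.2]]].

Local Open Scope ring_scope.

Definition Icond (m : nat) (i j t p : int) : bool :=
  [&& 0 <= i <= (Posz m), 0 <= j <= (Posz m),
      Num.max (i + j - (Posz m)) ((Posz m) - 1 - i - j) <= t,
      t <= (Posz m) - `|i - j|,
      Num.max (Num.max 0 (i + j - (Posz m))) (Num.max (i + t - (Posz m)) (j + t - (Posz m))) <= p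
    & p <= Num.min (Num.min i j) (Num.min t (i + j + t + 1 - (Posz m)))].

(* Main.v *)
Require Import Defs.
From mathcomp Require Import all_boot all_order all_algebra zify.
Import Order.TTheory GRing.Theory Num.Theory.

Definition Ncond (m i j t p : nat) : bool :=
  [&& p <= i, p <= j, p <= t, i + j <= m + p, i + t <= m + p, j + t <= m + p
    & m + p <= i + j + t + 1].

Lemma nec m (x y z : {set 'I_(2 * m + 1)}) : #|x| = m -> #|y| = m -> #|z| = m ->
  Ncond m #|x :&: y| #|x :&: z| #|y :&: z| #|x :&: y :&: z|.
Proof.
move=> hx hy hz.
have h1 : #|x :&: y :&: z| <= #|x :&: y| by apply: subset_leq_card; apply: subsetIl.
have h2 : #|x :&: y :&: z| <= #|x :&: z|.
  by apply: subset_leq_card; apply/subsetP => k; rewrite !inE => /andP[/andP[-> _] ->].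
have h3 : #|x :&: y :&: z| <= #|y :&: z|.
  by apply: subset_leq_card; apply/subsetP => k; rewrite !inE => /andP[/andP[_ ->] ->].
have hX := cardsUI (x :&: y) (x :&: z).
have eX : (x :&: y) :&: (x :&: z) = x :&: y :&: z.
  by apply/setP => k; rewrite !inE; case: (k \in x) (k \in y) (k \in z) => [] [] [].
have sX : #|(x :&: y) :|: (x :&: z)| <= #|x|.
  by apply: subset_leq_card; apply/subsetP => k; rewrite !inE => /orP[] /andP[-> _].
have hY := cardsUI (x :&: y) (y :&: z).
have eY : (x :&: y) :&: (y :&: z) = x :&: y :&: z.
  by apply/setP => k; rewrite !inE; case: (k \in x) (k \in y) (k \in z) => [] [] [].
have sY : #|(x :&: y) :|: (y :&: z)| <= #|y|.
  by apply: subset_leq_card; apply/subsetP => k; rewrite !inE => /orP[] /andP[] //.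
have hZ := cardsUI (x :&: z) (y :&: z).
have eZ : (x :&: z) :&: (y :&: z) = x :&: y :&: z.
  by apply/setP => k; rewrite !inE; case: (k \in x) (k \in y) (k \in z) => [] [] [].
have sZ : #|(x :&: z) :|: (y :&: z)| <= #|z|.
  by apply: subset_leq_card; apply/subsetP => k; rewrite !inE => /orP[] /andP[] //.
have u1 := cardsUI x y.
have u2 := cardsUI (x :|: y) z.
have eU : (x :|: y) :&: z = (x :&: z) :|: (y :&: z).
  by apply/setP => k; rewrite !inE; case: (k \in x) (k \in y) (k \in z) => [] [] [].
have sU : #|x :|: y :|: z| <= 2 * m + 1.
  by rewrite -[X in _ <= X](card_ord (2 * m + 1)); apply: max_card.
rewrite eX in hX; rewrite eY in hY; rewrite eZ in hZ; rewrite eU in u2.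
rewrite /Ncond; lia.
Qed.

Definition iv n (lo hi : nat) : {set 'I_n} := [set k : 'I_n | lo <= k < hi].

Lemma sum_iv lo hi N : \sum_(0 <= k < N) ((lo <= k) && (k < hi)) = minn N hi - lo.
Proof.
elim: N => [|N IH]; first by rewrite big_geq //; lia.
rewrite big_nat_recr //= IH.
have [h|h] := boolP ((lo <= N) && (N < hi)); rewrite ?h /=; [|move: h; rewrite negb_and -!ltnNge]; lia.
Qed.

Lemma card_iv n lo hi : hi <= n -> #|iv n lo hi| = hi - lo.
Proof.
move=> hn; rewrite /iv -sum1dep_card big_mkcond /=.
transitivity (\sum_(k < n) ((lo <= k) && (k < hi)) : nat).
  by apply: eq_bigr => k _; case: ifP.
rewrite -(big_mkord xpredT (fun k => ((lo <= k) && (k < hi)) : nat)) sum_iv; lia.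
Qed.

Lemma card_iv2 n lo1 hi1 lo2 hi2 : hi1 <= lo2 -> lo2 <= hi2 -> hi2 <= n ->
  #|iv n lo1 hi1 :|: iv n lo2 hi2| = (hi1 - lo1) + (hi2 - lo2).
Proof.
move=> h1 h3 h2.
have := cardsUI (iv n lo1 hi1) (iv n lo2 hi2).
have -> : iv n lo1 hi1 :&: iv n lo2 hi2 = set0.
  apply/setP => k; rewrite /iv !inE; apply/negbTE; apply/negP; lia.
rewrite cards0 addn0 !card_iv //; lia.
Qed.

Lemma suff m i j t p : Ncond m i j t p ->
  exists x y z : {set 'I_(2 * m + 1)},
    [/\ #|x| = m, #|y| = m, #|z| = m &
     [/\ #|x :&: y| = i, #|x :&: z| = j, #|y :&: z| = t & #|x :&: y :&: z| = p]].
Proof.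
move=> hN.
pose b1 := m + p - (i + j).
pose b2 := b1 + (j - p).
pose b3 := b2 + p.
pose b4 := b3 + (i - p).
pose b5 := b4 + (m + p - (i + t)).
pose b6 := b5 + (t - p).
pose b7 := b6 + (m + p - (j + t)).
have hb7 : b7 <= 2 * m + 1 by rewrite /b7 /b6 /b5 /b4 /b3 /b2 /b1; move: hN; rewrite /Ncond; lia.
move: hN; rewrite /Ncond => hN.
pose N := 2 * m + 1.
exists (iv N 0 b4), (iv N b2 b6), (iv N b1 b3 :|: iv N b5 b7).
have E1 : iv N 0 b4 :&: iv N b2 b6 = iv N b2 b4.
  apply/setP => k; rewrite /iv !inE; apply/idP/idP; rewrite /b1 /b2 /b3 /b4 /b5 /b6 /b7 in hb7 *; lia.
have E2 : iv N 0 b4 :&: (iv N b1 b3 :|: iv N b5 b7) = iv N b1 b3.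
  apply/setP => k; rewrite /iv !inE; apply/idP/idP; rewrite /b1 /b2 /b3 /b4 /b5 /b6 /b7 in hb7 *; lia.
have E3 : iv N b2 b6 :&: (iv N b1 b3 :|: iv N b5 b7) = iv N b2 b3 :|: iv N b5 b6.
  apply/setP => k; rewrite /iv !inE; apply/idP/idP; rewrite /b1 /b2 /b3 /b4 /b5 /b6 /b7 in hb7 *; lia.
have E4 : iv N 0 b4 :&: iv N b2 b6 :&: (iv N b1 b3 :|: iv N b5 b7) = iv N b2 b3.
  apply/setP => k; rewrite /iv !inE; apply/idP/idP; rewrite /b1 /b2 /b3 /b4 /b5 /b6 /b7 in hb7 *; lia.
rewrite E4 E1 E2 E3 !card_iv2 ?card_iv; rewrite /N /b1 /b2 /b3 /b4 /b5 /b6 /b7 in hb7 *; try lia.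
split; [lia|lia|lia|split; lia].
Qed.

Lemma part1 m i j t p : in_Im m i j t p <-> Icond m i j t p.
Proof.
split.
  case=> x [y [z [hx hy hz [e1 e2 e3 e4]]]].
  move: hx hy hz; rewrite !inE => /eqP hx /eqP hy /eqP hz.
  have := nec _ _ _ _ hx hy hz; rewrite -e1 -e2 -e3 -e4 /Ncond /Icond => H; lia.
rewrite /Icond => H.
have [i' Ei] : exists n : nat, i = n by case: i H => [n|n] H; [exists n|rewrite NegzE in H; lia]. subst i.
have [j' Ej] : exists n : nat, j = n by case: j H => [n|n] H; [exists n|rewrite NegzE in H; lia]. subst j.
have [t' Et] : exists n : nat, t = n by case: t H => [n|n] H; [exists n|rewrite NegzE in H; lia]. subst t.
have [p' Ep] : exists n : nat, p = n by case: p H => [n|n] H; [exists n|rewrite NegzE in H; lia]. subst p.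
have hN : Ncond m i' j' t' p' by rewrite /Ncond; lia.
have [x [y [z [hx hy hz [e1 e2 e3 e4]]]]] := suff _ _ _ _ _ hN.
exists x, y, z; split; rewrite ?inE ?hx ?hy ?hz //; split; congruence.
Qed.

Lemma Imset_E m q : (q \in Imset m) = Ncond m q.1.1.1 q.1.1.2 q.1.2 q.2.
Proof.
rewrite inE; apply/idP/idP.
  case/existsP => x /andP[hx /existsP[y /andP[hy /existsP [z /andP[hz]]]]].
  case/and4P => /eqP e1 /eqP e2 /eqP e3 /eqP e4.
  move: hx hy hz; rewrite !inE => /eqP hx /eqP hy /eqP hz.
  by rewrite -e1 -e2 -e3 -e4; apply: (nec _ _ _ _ hx hy hz).
move/(suff _ _ _ _ _) => [x [y [z [hx hy hz [e1 e2 e3 e4]]]]].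
apply/existsP; exists x; rewrite inE hx eqxx /=.
apply/existsP; exists y; rewrite inE hy eqxx /=.
apply/existsP; exists z; rewrite inE hz eqxx /=.
by rewrite e1 e2 e3 e4 !eqxx.
Qed.

Definition quad m := ('I_m.+1 * 'I_m.+1 * 'I_m.+1 * 'I_m.+1)%type.

Definition fq (m : nat) (q : quad m) : 4.-tuple 'I_m.+1 :=
  let i := val q.1.1.1 in let j := val q.1.1.2 in let t := val q.1.2 in let p := val q.2 in
  let X := (m + p) - (i + j) in let d := t - p in
  if d <= X then [tuple inord p; inord (i - p); inord (j - p); inord d]
  else [tuple inord (d - X - 1); inord (i - p - (d - X)); inord (j - p - (d - X)); inord X].

Definition gq (m : nat) (u : 4.-tuple 'I_m.+1) : quad m :=
  let u1 := val (nth ord0 u 0) in let u2 := val (nth ord0 u 1) in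
  let u3 := val (nth ord0 u 2) in let u4 := val (nth ord0 u 3) in
  let m' := m - u4 in
  if m' <= (2 * u1 + u2 + u3).+1 then (inord (u1 + u2), inord (u1 + u3), inord (u1 + u4), inord u1)
  else let a := m' - (u2 + u3 + 2 * u1 + 2) in
    (inord (a + (u2 + u1 + 1)), inord (a + (u3 + u1 + 1)), inord (a + (u1 + 1 + u4)), inord a).

Lemma tuple4 T (u : 4.-tuple T) : exists a b c d, u = [tuple a; b; c; d].
Proof.
case: u => [[|a [|b [|c [|d [|e s]]]]] //= Hs].
by exists a, b, c, d; apply: val_inj.
Qed.

Ltac crunch := repeat match goal with
 | |- context [val (@inord ?n ?x)] => rewrite (@inordK n x); [|lia]
 | |- context [nat_of_ord (@inord ?n ?x)] => rewrite (@inordK n x); [|lia] end.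

Definition T4 m := [set t : 4.-tuple 'I_m.+1 | \sum_(i <- t) i <= m].

Lemma f_in m q : q \in Imset m -> fq m q \in T4 m.
Proof.
case: q => [[[i j] t] p]; rewrite Imset_E /Ncond /= => H.
rewrite /fq /T4 inE /=; case: ifP => h; rewrite /= !big_cons big_nil; crunch; lia.
Qed.

Lemma g_in m u : u \in T4 m -> gq m u \in Imset m.
Proof.
have [a [b [c [d ->]]]] := tuple4 _ u.
rewrite /T4 inE /= !big_cons big_nil => H.
have := ltn_ord a; have := ltn_ord b; have := ltn_ord c; have := ltn_ord d => ha hb hc hd.
rewrite /gq /=; case: ifP => h; rewrite Imset_E /Ncond /=; crunch; lia.
Qed.

Lemma fgK m : {in Imset m, cancel (fq m) (gq m)}.
Proof.
case=> [[[i j] t] p]; rewrite Imset_E /Ncond /= => H.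
rewrite /fq /=; case: ifP => h1; rewrite /gq /=; crunch; case: ifP => h2;
  (congr (_, _, _, _); apply: val_inj; rewrite /=; crunch; lia).
Qed.

Lemma gfK m : {in T4 m, cancel (gq m) (fq m)}.
Proof.
move=> u; have [a [b [c [d ->]]]] := tuple4 _ u.
rewrite /T4 inE /= !big_cons big_nil => H.
have := ltn_ord a; have := ltn_ord b; have := ltn_ord c; have := ltn_ord d => ha hb hc hd.
rewrite /gq /=; case: ifP => h1; rewrite /fq /=; crunch; case: ifP => h2;
  (apply: val_inj; rewrite /=; congr [:: _; _; _; _]; apply: val_inj; rewrite /=; crunch; lia).
Qed.

Lemma card_Imset m : #|Imset m| = 'C(m + 4, 4).
Proof.
rewrite addnC -card_partial_ord_partitions -/(T4 m).
apply/eqP; rewrite eqn_leq; apply/andP; split.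
  rewrite -(card_in_imset (can_in_inj (@fgK m))); apply: subset_leq_card.
  by apply/subsetP => _ /imsetP[q hq ->]; apply: f_in.
rewrite -(card_in_imset (can_in_inj (@gfK m))); apply: subset_leq_card.
by apply/subsetP => _ /imsetP[q hq ->]; apply: g_in.
Qed.

Theorem proposition3p1 (m : nat) (hm : (1 <= m)%N) :
  (forall i j t p : int, in_Im m i j t p <-> Icond m i j t p) /\
  #|Imset m| = 'C(m + 4, 4).
Proof. split; [exact: part1 | exact: card_Imset]. Qed.
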